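(* Let $\Theta$ be a variety of universal algebras and let $H$ be a finitely generated free $\Theta$-algebra. If $H$ is weakly homogeneous, then $H$ is logically perfect.
   Context: $X^0=\{x_1,x_2,\dots\}$ is an infinite set of variables; for finite $X\subset X^0$, $W(X)$ is the free $\Theta$-algebra on $X$; homomorphisms $W(X)\to H$ are called points. For each finite $X$, the set $\Phi(X)$ of formulas of sort $X$ is defined inductively: equalities $w\equiv w'$ ($w,w'\in W(X)$) are in $\Phi(X)$; $\Phi(X)$ is closed under $\neg,\vee,\wedge$ and $\exists x$ for $x\in X$; and for every homomorphism $s:W(X)\to W(Y)$ and $u\in\Phi(X)$, $s_*u\in\Phi(Y)$. Values $Val^X_H(u)\subseteq\mathrm{Hom}(W(X),H)$: $Val^X_H(w\equiv w')=\{\mu:\mu(w)=\mu(w')\}$; $\mu\in Val^X_H(\exists x\,u)$ iff some point $\nu$ agreeing with $\mu$ on $X\setminus\{x\}$ lies in $Val^X_H(u)$; $\vee,\wedge,\neg$ are union, intersection, complement; $\mu\in Val^Y_H(s_*u)$ iff $\mu\circ s\in Val^X_H(u)$. The logical kernel of a point $\mu:W(X)\to H$ is $LKer(\mu)=\{u\in\Phi(X):\mu\in Val^X_H(u)\}$. An algebra $H$ is logically perfect if for every finite $X$ and every two points $\mu,\nu:W(X)\to H$ with $LKer(\mu)=LKer(\nu)$ there is an automorphism $\varphi$ of $H$ with $\mu=\varphi\circ\nu$. An algebra $H$ is weakly homogeneous if for every isomorphism $\varphi:A\to B$ between finitely generated subalgebras $A,B$ of $H$ such that both $\varphi$ and $\varphi^{-1}:B\to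 A$ extend to endomorphisms of $H$, the map $\varphi$ extends to an automorphism of $H$. *)

(* Defs.v *)
From mathcomp Require Import all_boot finmap.
Set Implicit Arguments. Unset Strict Implicit. Unset Printing Implicit Defensive.
Open Scope fset_scope.

Record signature := Signature { op : Type; arity : op -> nat }.

Inductive term (S : signature) (V : Type) : Type :=
| tvar : V -> term S V
| tapp : forall o : op S, ('I_(arity o) -> term S V) -> term S V.
Arguments tvar {S V}.
Arguments tapp {S V}.

Record algebra (S : signature) := Algebra {
  carrier :> Type;
  interp : forall o : op S, ('I_(arity o) -> carrier) -> carrier }.
Arguments interp {S}.

Fixpoint eval (S : signature) (A : algebra S) (V : Type) (f : V -> A)
  (t : term S V) : A :=
  match t with
  | tvar v => f v
  | tapp o ts => interp A o (fun i => eval f (ts i))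
  end.

Definition hom (S : signature) (A B : algebra S) (h : A -> B) : Prop :=
  forall (o : op S) (args : 'I_(arity o) -> A),
    h (interp A o args) = interp B o (fun i => h (args i)).

Definition endomorphism (S : signature) (A : algebra S) (h : A -> A) : Prop :=
  hom h.

Definition automorphism (S : signature) (A : algebra S) (h : A -> A) : Prop :=
  hom h /\ bijective h.

(* A variety Theta is given by its set of defining identities
   (pairs of terms in the variables x_0, x_1, ... ) *)
Definition identities (S : signature) := term S nat -> term S nat -> Prop.

Definition in_variety (S : signature) (Th : identities S) (A : algebra S) : Prop :=
  forall l r, Th l r -> forall f : nat -> A, eval f l = eval f r.

Definition fg_free_in (S : signature) (Th : identities S) (H : algebra S) : Prop :=
  in_variety Th H /\
  exists (n : nat) (b : 'I_n -> H),
    forall (K : algebra S), in_variety Th K ->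
    forall f : 'I_n -> K,
      exists h : H -> K,
        [/\ hom h, (forall i, h (b i) = f i) &
            (forall h' : H -> K, hom h' -> (forall i, h' (b i) = f i) ->
               forall x, h' x = h x)].

Definition subalgebra (S : signature) (H : algebra S) (A : H -> Prop) : Prop :=
  forall (o : op S) (args : 'I_(arity o) -> H),
    (forall i, A (args i)) -> A (interp H o args).

Inductive generated (S : signature) (H : algebra S) (G : H -> Prop) : H -> Prop :=
| gen_base x : G x -> generated G x
| gen_op (o : op S) (args : 'I_(arity o) -> H) :
    (forall i, generated G (args i)) -> generated G (interp H o args).

Definition fg_subalgebra (S : signature) (H : algebra S) (A : H -> Prop) : Prop :=
  exists (n : nat) (g : 'I_n -> H),
    forall x, A x <-> generated (fun y => exists i, y = g i) x.

(* phi (a total function on H, only its restriction to A matters) is an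
   isomorphism from the subalgebra A onto the subalgebra B *)
Definition sub_iso (S : signature) (H : algebra S) (A B : H -> Prop)
  (phi : H -> H) : Prop :=
  [/\ (forall a, A a -> B (phi a)),
      (forall b, B b -> exists2 a, A a & phi a = b),
      (forall a a', A a -> A a' -> phi a = phi a' -> a = a') &
      (forall (o : op S) (args : 'I_(arity o) -> H), (forall i, A (args i)) ->
         phi (interp H o args) = interp H o (fun i => phi (args i)))].

Definition weakly_homogeneous (S : signature) (H : algebra S) : Prop :=
  forall (A B : H -> Prop) (phi : H -> H),
    fg_subalgebra A -> fg_subalgebra B -> sub_iso A B phi ->
    (exists psi, endomorphism psi /\ forall a, A a -> psi a = phi a) ->
    (exists chi, endomorphism chi /\ forall a, A a -> chi (phi a) = a) ->
    exists alpha, automorphism alpha /\ forall a, A a -> alpha a = phi a.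

(* Elements of W(X) are represented by terms over X; a homomorphism
   s : W(X) -> W(Y) is given by the images of the free generators (a map
   X -> term Y); a point W(X) -> H is given by its values on the free
   generators (a map X -> H). *)
Inductive formula (S : signature) : {fset nat} -> Type :=
| Feq (X : {fset nat}) : term S X -> term S X -> formula S X
| Fneg (X : {fset nat}) : formula S X -> formula S X
| For (X : {fset nat}) : formula S X -> formula S X -> formula S X
| Fand (X : {fset nat}) : formula S X -> formula S X -> formula S X
| Fex (X : {fset nat}) (x : X) : formula S X -> formula S X
| Fsub (X Y : {fset nat}) (s : X -> term S Y) : formula S X -> formula S Y.

Definition upd (X : {fset nat}) (T : Type) (mu : X -> T) (x : X) (a : T) : X -> T :=
  fun y => if y == x then a else mu y.

Fixpoint sat (S : signature) (H : algebra S) (X : {fset nat})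
  (u : formula S X) : (X -> H) -> Prop :=
  match u in formula _ X return (X -> H) -> Prop with
  | Feq _ w w' => fun mu => eval mu w = eval mu w'
  | Fneg _ u => fun mu => ~ @sat S H _ u mu
  | For _ u v => fun mu => @sat S H _ u mu \/ @sat S H _ v mu
  | Fand _ u v => fun mu => @sat S H _ u mu /\ @sat S H _ v mu
  | Fex _ x u => fun mu => exists a : H, @sat S H _ u (upd mu x a)
  | Fsub _ _ s u => fun mu => @sat S H _ u (fun x => eval mu (s x))
  end.

Definition same_LKer (S : signature) (H : algebra S) (X : {fset nat})
  (mu nu : X -> H) : Prop :=
  forall u : formula S X, sat u mu <-> sat u nu.

Definition logically_perfect (S : signature) (H : algebra S) : Prop :=
  forall (X : {fset nat}) (mu nu : X -> H),
    same_LKer mu nu ->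
    exists phi, automorphism phi /\ forall x : X, mu x = phi (nu x).

(* Main.v *)
Require Import Defs.
From mathcomp Require Import all_boot finmap.
From Stdlib Require Import FunctionalExtensionality ProofIrrelevance IndefiniteDescription.
Set Implicit Arguments. Unset Strict Implicit. Unset Printing Implicit Defensive.
Open Scope fset_scope.

Fixpoint tmap (S : signature) (V W : Type) (f : V -> W) (t : term S V) : term S W :=
  match t with
  | tvar v => tvar (f v)
  | tapp o ts => tapp o (fun i => tmap f (ts i))
  end.

Lemma eval_tmap (S : signature) (A : algebra S) V W (f : V -> W) (p : W -> A) t :
  eval p (tmap f t) = eval (fun v => p (f v)) t.
Proof.
elim: t => //= o ts IH; congr (interp A o); apply: functional_extensionality => i; exact: IH.
Qed.

Lemma eval_ext (S : signature) (A : algebra S) V (p q : V -> A) t :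
  (forall v, p v = q v) -> eval p t = eval q t.
Proof. by move=> h; have -> : p = q by apply: functional_extensionality. Qed.

Lemma hom_eval (S : signature) (A B : algebra S) (f : A -> B) V (p : V -> A) t :
  hom f -> f (eval p t) = eval (fun v => f (p v)) t.
Proof.
move=> hf; elim: t => //= o ts IH; rewrite hf; congr (interp B o).
apply: functional_extensionality => i; exact: IH.
Qed.

Lemma gen_fix (S : signature) (H : algebra S) (G : H -> Prop) (f : H -> H) x :
  hom f -> (forall y, G y -> f y = y) -> generated G x -> f x = x.
Proof.
move=> hf hG; elim => [y /hG //| o args _ IH].
rewrite hf; congr (interp H o); apply: functional_extensionality => i; exact: IH.
Qed.

Lemma gen_img (S : signature) (H : algebra S) (G G' : H -> Prop) (f : H -> H) x :
  hom f -> (forall y, G y -> G' (f y)) -> generated G x -> generated G' (f x).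
Proof.
move=> hf hG; elim => [y /hG ? | o args _ IH]; first exact: gen_base.
rewrite hf; exact: gen_op.
Qed.

Lemma gen_term (S : signature) (H : algebra S) n (b : 'I_n -> H) x :
  generated (fun y => exists i, y = b i) x -> exists w, eval b w = x.
Proof.
elim => [y [i ->]| o args _ IH]; first by exists (tvar i).
exists (tapp o (fun i => proj1_sig (constructive_indefinite_description _ (IH i)))) => /=.
congr (interp H o); apply: functional_extensionality => i.
by case: (constructive_indefinite_description _ _).
Qed.

Section SubAlg.
Variables (S : signature) (H : algebra S) (G : H -> Prop).
Definition subcar := {x : H | generated G x}.
Definition subinterp (o : op S) (args : 'I_(arity o) -> subcar) : subcar :=
  exist _ (interp H o (fun i => proj1_sig (args i)))
        (gen_op (fun i => proj2_sig (args i))).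
Definition subA : algebra S := @Algebra S subcar subinterp.
Lemma eval_sub V (f : V -> subA) t :
  proj1_sig (eval f t) = eval (fun v => proj1_sig (f v)) t.
Proof.
elim: t => //= o ts IH; congr (interp H o); apply: functional_extensionality => i; exact: IH.
Qed.
End SubAlg.

Lemma free_gen (S : signature) (Th : identities S) (H : algebra S) n (b : 'I_n -> H) :
  in_variety Th H ->
  (forall (K : algebra S), in_variety Th K ->
    forall f : 'I_n -> K,
      exists h : H -> K,
        [/\ hom h, (forall i, h (b i) = f i) &
            (forall h' : H -> K, hom h' -> (forall i, h' (b i) = f i) ->
               forall x, h' x = h x)]) ->
  forall x, generated (fun y => exists i, y = b i) x.
Proof.
move=> hv hfree x.
set G := fun y => exists i, y = b i.
have hvS : in_variety Th (subA G).
  move=> l r hlr f; apply: eq_sig_hprop; first by move=> *; apply: proof_irrelevance.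
  rewrite !eval_sub; exact: hv.
have [h [hh hb _]] := hfree _ hvS (fun i => exist _ (b i) (gen_base (ex_intro _ i erefl))).
have [h0 [_ _ hu]] := hfree _ hv b.
have e1 := hu id (fun _ _ => erefl) (fun _ => erefl) x.
have e2 := hu (fun y => proj1_sig (h y)) _ _ x.
have : proj1_sig (h x) = x.
  rewrite e2 //; last by move=> i; rewrite hb.
  by move=> o args; rewrite hh.
move=> <-; exact: proj2_sig.
Qed.

Definition Exs (S : signature) (Z : {fset nat}) (l : seq Z) (u : formula S Z) :=
  foldr (fun z v => Fex z v) u l.

Lemma sat_Exs (S : signature) (H : algebra S) (Z : {fset nat}) (l : seq Z) u (p : Z -> H) :
  sat (Exs l u) p <-> exists q, (forall z, z \notin l -> q z = p z) /\ sat u q.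
Proof.
elim: l p => [|z l IH] p /=.
  split; first by move=> h; exists p.
  by move=> [q [hq hs]]; have -> : p = q by apply: functional_extensionality => z; rewrite hq.
split.
  move=> [a /IH [q [hq hs]]]; exists q; split => // z'.
  rewrite inE negb_or => /andP [h1 h2]; rewrite hq // /upd (negbTE h1) //.
move=> [q [hq hs]]; exists (q z); apply/IH; exists q; split => // z' hz'.
rewrite /upd; case: eqP => [-> //|/eqP ne]; apply: hq.
by rewrite inE negb_or ne.
Qed.

Lemma sat_Conj (S : signature) (H : algebra S) (Z : {fset nat}) (T : eqType) (s : seq T)
  (E : T -> formula S Z) base (p : Z -> H) :
  sat (foldr (@Fand S Z) base (map E s)) p <-> sat base p /\ forall x, x \in s -> sat (E x) p.
Proof.
elim: s => [|y s IH] /=; first by split => [h|[]//]; split.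
split.
  move=> [h1 /IH [h2 h3]]; split => // x; rewrite inE => /orP [/eqP -> //|]; exact: h3.
move=> [h1 h2]; split; first by apply: h2; rewrite inE eqxx.
apply/IH; split => // x hx; apply: h2; by rewrite inE hx orbT.
Qed.

Section Form.
Variables (S : signature) (H : algebra S) (n : nat) (X : {fset nat}) (x0 : X)
  (w : X -> term S 'I_n).

Definition mm := (\sum_(y <- X) y).+1.
Definition ZZ : {fset nat} := seq_fset tt (X ++ map (addn mm) (iota 0 n)).

Lemma mm_gt (x : X) : val x < mm.
Proof. by rewrite ltnS (big_rem (val x)) //= ?leq_addr // (fsvalP x). Qed.

Lemma inZP (x : X) : val x \in ZZ.
Proof. by rewrite seq_fsetE mem_cat (fsvalP x). Qed.

Lemma freshP (i : 'I_n) : (mm + i)%N \in ZZ.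
Proof. by rewrite seq_fsetE mem_cat map_f ?orbT // mem_iota /=. Qed.

Definition inZ (x : X) : ZZ := [` inZP x].
Definition fresh (i : 'I_n) : ZZ := [` freshP i].
Definition ll := map fresh (enum 'I_n).
Definition ss (z : ZZ) : term S X := tvar (insubd x0 (val z)).
Definition EE (x : X) : formula S ZZ := Feq (tvar (inZ x)) (tmap fresh (w x)).
Definition base : formula S ZZ := Feq (tvar (inZ x0)) (tvar (inZ x0)).
Definition Gf : formula S X :=
  Fsub ss (Exs ll (foldr (@Fand S ZZ) base (map EE (enum {: X})))).

Lemma inZ_notin x : inZ x \notin ll.
Proof.
apply/mapP => -[i _ /(congr1 val) /= e].
have := mm_gt x; rewrite /=; move=> h. have : (mm <= val x)%N by rewrite [val x]e leq_addr. by rewrite leqNgt h.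
Qed.

Lemma sat_Gf (mu : X -> H) : sat Gf mu <-> exists c, forall x, mu x = eval c (w x).
Proof.
rewrite /Gf /=; rewrite sat_Exs; split.
  move=> [q [hq /sat_Conj [_ hc]]]; exists (fun i => q (fresh i)) => x.
  have := hc x (mem_enum _ x); rewrite /EE /= eval_tmap => <-.
  by rewrite hq ?inZ_notin //= valKd.
move=> [c hc].
pose q := fun z : ZZ => if z \in ll then (if insub (val z - mm)%N is Some i then c i else eval mu (ss z)) else eval mu (ss z).
have qf i : q (fresh i) = c i.
  rewrite /q map_f ?mem_enum //= addKn.
  case: insubP => [j _ e|]; last by rewrite (valP i).
  by congr c; apply: val_inj.
exists q; split; first by move=> z /negbTE hz; rewrite /q hz.
apply/sat_Conj; split => // x _; rewrite /EE /= eval_tmap.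
rewrite /q (negbTE (inZ_notin x)) /= valKd hc; apply: eval_ext => i; exact: (esym (qf i)).
Qed.
End Form.

Theorem mainTheorem2 (S : signature) (Th : identities S) (H : algebra S) :
  fg_free_in Th H -> weakly_homogeneous H -> logically_perfect H.
Proof.
move=> [hv [n [b hfree]]] hwh X mu nu hL.
have hgen y : exists w, eval b w = y := gen_term (free_gen hv hfree y).
case: (pickP (fun _ : X => true)) => [x0 _|h0]; last first.
  exists id; split; last by move=> x; have := h0 x.
  by split => //; exists id.
have endo (mu' nu' : X -> H) : same_LKer mu' nu' ->
    exists psi, hom psi /\ forall x, psi (nu' x) = mu' x.
  move=> hL'.
  pose w x := proj1_sig (constructive_indefinite_description _ (hgen (nu' x))).
  have hw x : eval b (w x) = nu' x.
    by rewrite /w; case: (constructive_indefinite_description _ _).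
  have : sat (Gf x0 w) nu' by apply/sat_Gf; exists b => x; rewrite hw.
  move/hL'/sat_Gf => [c hc].
  have [psi [hp hb _]] := hfree _ hv c.
  exists psi; split => // x.
  rewrite -hw hom_eval // hc; apply: eval_ext => i; exact: hb.
have [psi [hp hpsi]] := endo mu nu hL.
have [chi [hc hchi]] := endo nu mu (fun u => iff_sym (hL u)).
pose Gn := fun y => exists i : 'I_#|{: X}|, y = nu (enum_val i).
pose Gm := fun y => exists i : 'I_#|{: X}|, y = mu (enum_val i).
pose A := generated Gn. pose B := generated Gm.
have hA x : A (nu x) by apply: gen_base; exists (enum_rank x); rewrite enum_rankK.
have AB a : A a -> B (psi a).
  apply: gen_img => // y [i ->]; exists i; exact: hpsi.
have BA a : B a -> A (chi a).
  apply: gen_img => // y [i ->]; exists i; exact: hchi.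
have hcp : hom (fun y => chi (psi y)) by move=> o args; rewrite hp hc.
have hpc : hom (fun y => psi (chi y)) by move=> o args; rewrite hc hp.
have cp a : A a -> chi (psi a) = a.
  apply: (gen_fix hcp) => y [i ->]; by rewrite hpsi hchi.
have pc a : B a -> psi (chi a) = a.
  apply: (gen_fix hpc) => y [i ->]; by rewrite hchi hpsi.
have [] := hwh A B psi.
- by exists #|{: X}|, (fun i => nu (enum_val i)).
- by exists #|{: X}|, (fun i => mu (enum_val i)).
- split.
  + exact: AB.
  + by move=> b' hb'; exists (chi b'); [exact: BA | exact: pc].
  + by move=> a a' ha ha' e; rewrite -(cp a ha) -(cp a' ha') e.
  + by move=> o args _; exact: hp.
- by exists psi; split.
- by exists chi; split => // a ha; exact: cp.
move=> alpha [halpha he]; exists alpha; split => // x.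
by rewrite he ?hA // hpsi.
Qed.
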